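(* All rules of $\mathsf{G}(\mathbf{KT}^+_D)$ except $(D_K^+)$ (that is, the eight propositional rules and $(D_T^+)$) are height-preserving invertible: whenever the conclusion of an instance of such a rule has a derivation of height $n$, each premise of that instance has a derivation of height at most $n$.
   Context: Language: fix a finite nonempty set $\mathsf{Agt}$ of agents and a countable set $\mathsf{Prop}$ of propositional variables; $\mathsf{Grp}$ is the set of nonempty subsets of $\mathsf{Agt}$. Formulas: $\alpha::=p\mid\bot\mid\alpha\wedge\alpha\mid\alpha\vee\alpha\mid\alpha\rightarrow\alpha\mid\neg\alpha\mid D_G\alpha$ ($p\in\mathsf{Prop}$, $G\in\mathsf{Grp}$). Outmost-boxed formula: one of the form $D_G\gamma$. Calculus $\mathsf{G}(\mathbf{KT}^+_D)$ (a derivation is a finite tree built from initial sequents by the rules; its height is the maximum length of a branch from the end sequent to an initial sequent): a T-sequent $\Sigma\mid\Gamma\Rightarrow\Delta$ consists of finite multisets $\Gamma,\Delta$ of formulas and a finite multiset $\Sigma$ of outmost-boxed formulas. Initial sequents: $\Sigma\mid\Gamma,p\Rightarrow p,\Delta$ ($p\in\mathsf{Prop}$) and $\Sigma\mid\bot,\Gamma\Rightarrow\Delta$. Propositional rules (with $\Sigma$ unchanged): $(R\wedge)$ from $\Sigma\mid\Gamma\Rightarrow\Delta,\alpha_1$ and $\Sigma\mid\Gamma\Rightarrow\Delta,\alpha_2$ infer $\Sigma\mid\Gamma\Rightarrow\Delta,\alpha_1\wedge\alpha_2$; $(L\wedge)$ from $\Sigma\mid\alpha_1,\alpha_2,\Gamma\Rightarrow\Delta$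 infer $\Sigma\mid\alpha_1\wedge\alpha_2,\Gamma\Rightarrow\Delta$; $(R\vee)$ from $\Sigma\mid\Gamma\Rightarrow\Delta,\alpha_1,\alpha_2$ infer $\Sigma\mid\Gamma\Rightarrow\Delta,\alpha_1\vee\alpha_2$; $(L\vee)$ from $\Sigma\mid\alpha_1,\Gamma\Rightarrow\Delta$ and $\Sigma\mid\alpha_2,\Gamma\Rightarrow\Delta$ infer $\Sigma\mid\alpha_1\vee\alpha_2,\Gamma\Rightarrow\Delta$; $(R\rightarrow)$ from $\Sigma\mid\alpha_1,\Gamma\Rightarrow\Delta,\alpha_2$ infer $\Sigma\mid\Gamma\Rightarrow\Delta,\alpha_1\rightarrow\alpha_2$; $(L\rightarrow)$ from $\Sigma\mid\Gamma\Rightarrow\Delta,\alpha_1$ and $\Sigma\mid\alpha_2,\Gamma\Rightarrow\Delta$ infer $\Sigma\mid\alpha_1\rightarrow\alpha_2,\Gamma\Rightarrow\Delta$; $(R\neg)$ from $\Sigma\mid\alpha,\Gamma\Rightarrow\Delta$ infer $\Sigma\mid\Gamma\Rightarrow\Delta,\neg\alpha$; $(L\neg)$ from $\Sigma\mid\Gamma\Rightarrow\Delta,\alpha$ infer $\Sigma\mid\neg\alpha,\Gamma\Rightarrow\Delta$. Modal rules: $(D_K^+)$: from $\emptyset\mid\alpha_1,\dots,\alpha_n\Rightarrow\beta$ ($n\ge0$) infer $\Sigma,D_{G_1}\alpha_1,\dots,D_{G_n}\alpha_n\mid\Pi\Rightarrow D_G\beta,\Omega$, provided $G_i\subseteq G$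 for all $i$, $\Sigma$ consists only of formulas $D_H\gamma$ with $H\not\subseteq G$, $\Pi$ only of propositional variables and $\bot$, and $\Omega$ only of propositional variables, $\bot$ and outmost-boxed formulas; $(D_T^+)$: from $D_G\alpha,\Sigma\mid\Gamma,\alpha\Rightarrow\Delta$ infer $\Sigma\mid\Gamma,D_G\alpha\Rightarrow\Delta$. *)

(* Defs.v *)
From HB Require Import structures.
From mathcomp Require Import all_boot.
From Stdlib Require Import Permutation.
From Stdlib Require List.

Set Implicit Arguments.
Unset Strict Implicit.
Unset Printing Implicit Defensive.

Definition grp (A : finType) := {G : {set A} | G != set0}.

Inductive form (A : finType) : Type :=
| Var : nat -> form A
| Bot : form A
| And : form A -> form A -> form A
| Or  : form A -> form A -> form A
| Imp : form A -> form A -> form A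
| Neg : form A -> form A
| Box : grp A -> form A -> form A.
Arguments Bot {A}.

(* T-sequents  Sigma | Gamma => Delta.  Multisets are lists taken up to
   permutation.  Sigma consists of outmost-boxed formulas D_G g, stored as
   pairs (G, g). *)
Record tseq (A : finType) := TSeq {
  tsig : list (grp A * form A);
  tant : list (form A);
  tsuc : list (form A) }.

Definition seq_equiv (A : finType) (s t : tseq A) : Prop :=
  Permutation (tsig s) (tsig t) /\ Permutation (tant s) (tant t)
  /\ Permutation (tsuc s) (tsuc t).

Definition initial (A : finType) (c : tseq A) : Prop :=
  (exists p S G D, seq_equiv c (TSeq S (Var A p :: G) (Var A p :: D))) \/
  (exists S G D, seq_equiv c (TSeq S (Bot :: G) D)).

Definition is_atomic (A : finType) (f : form A) : Prop :=
  match f with Var _ | Bot => True | _ => False end.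
Definition is_atomic_or_boxed (A : finType) (f : form A) : Prop :=
  match f with Var _ | Bot | Box _ _ => True | _ => False end.

Inductive rname : Type :=
| RAndR | RAndL | ROrR | ROrL | RImpR | RImpL | RNegR | RNegL | RDT | RDK.

Inductive rule (A : finType) : rname -> list (tseq A) -> tseq A -> Prop :=
| r_andR S G D a1 a2 c :
    seq_equiv c (TSeq S G (And a1 a2 :: D)) ->
    rule RAndR [:: TSeq S G (a1 :: D); TSeq S G (a2 :: D)] c
| r_andL S G D a1 a2 c :
    seq_equiv c (TSeq S (And a1 a2 :: G) D) ->
    rule RAndL [:: TSeq S (a1 :: a2 :: G) D] c
| r_orR S G D a1 a2 c :
    seq_equiv c (TSeq S G (Or a1 a2 :: D)) ->
    rule ROrR [:: TSeq S G (a1 :: a2 :: D)] c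
| r_orL S G D a1 a2 c :
    seq_equiv c (TSeq S (Or a1 a2 :: G) D) ->
    rule ROrL [:: TSeq S (a1 :: G) D; TSeq S (a2 :: G) D] c
| r_impR S G D a1 a2 c :
    seq_equiv c (TSeq S G (Imp a1 a2 :: D)) ->
    rule RImpR [:: TSeq S (a1 :: G) (a2 :: D)] c
| r_impL S G D a1 a2 c :
    seq_equiv c (TSeq S (Imp a1 a2 :: G) D) ->
    rule RImpL [:: TSeq S G (a1 :: D); TSeq S (a2 :: G) D] c
| r_negR S G D a c :
    seq_equiv c (TSeq S G (Neg a :: D)) ->
    rule RNegR [:: TSeq S (a :: G) D] c
| r_negL S G D a c :
    seq_equiv c (TSeq S (Neg a :: G) D) ->
    rule RNegL [:: TSeq S G (a :: D)] c
| r_DT S G D (g : grp A) a c :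
    seq_equiv c (TSeq S (Box g a :: G) D) ->
    rule RDT [:: TSeq ((g, a) :: S) (a :: G) D] c
| r_DK (S bs : list (grp A * form A)) (Pi Om : list (form A)) (g : grp A)
    (b : form A) (c : tseq A) :
    (forall h : grp A * form A, List.In h bs -> val h.1 \subset val g) ->
    (forall h : grp A * form A, List.In h S -> ~~ (val h.1 \subset val g)) ->
    List.Forall (@is_atomic A) Pi ->
    List.Forall (@is_atomic_or_boxed A) Om ->
    seq_equiv c (TSeq (S ++ bs) Pi (Box g b :: Om)) ->
    rule RDK [:: TSeq [::] (map snd bs) [:: b]] c.

Inductive derh (A : finType) : nat -> tseq A -> Prop :=
| dh_init c : initial c -> derh 0 c
| dh_rule r ps c hs :
    rule r ps c -> List.Forall2 (@derh A) hs ps ->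
    derh (foldr maxn 0 hs).+1 c.

(* Main.v *)
Require Import Defs.
From HB Require Import structures.
From mathcomp Require Import all_boot.
From Stdlib Require Import Permutation.
From Stdlib Require List.
From Stdlib Require Import Classical.
From mathcomp Require Import zify.

Set Implicit Arguments.
Unset Strict Implicit.
Section Aux.
Variable A : finType.

Definition trip := (list (grp A * form A) * list (form A) * list (form A))%type.

Definition app3 (S : list (grp A * form A)) (G D : list (form A)) (t : trip) : tseq A :=
  TSeq (List.app t.1.1 S) (List.app t.1.2 G) (List.app t.2 D).

Definition concl (s : bool) (f : form A) S G D : tseq A :=
  if s then TSeq S (f :: G) D else TSeq S G (f :: D).

Definition premsof (s : bool) (f : form A) : list trip :=
  match s, f with
  | true, And a b => [:: ([::], [:: a; b], [::])]
  | true, Or a b => [:: ([::], [:: a], [::]); ([::], [:: b], [::])]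
  | true, Imp a b => [:: ([::], [::], [:: a]); ([::], [:: b], [::])]
  | true, Neg a => [:: ([::], [::], [:: a])]
  | true, Box g a => [:: ([:: (g, a)], [:: a], [::])]
  | false, And a b => [:: ([::], [::], [:: a]); ([::], [::], [:: b])]
  | false, Or a b => [:: ([::], [::], [:: a; b])]
  | false, Imp a b => [:: ([::], [:: a], [:: b])]
  | false, Neg a => [:: ([::], [:: a], [::])]
  | _, _ => [::]
  end.

Definition ok (s : bool) (f : form A) : Prop :=
  match s, f with
  | true, (And _ _ | Or _ _ | Imp _ _ | Neg _ | Box _ _) => True
  | false, (And _ _ | Or _ _ | Imp _ _ | Neg _) => True
  | _, _ => False
  end.

Lemma se_refl (c : tseq A) : seq_equiv c c.
Proof. repeat split; apply Permutation_refl. Qed.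
Lemma se_sym (c d : tseq A) : seq_equiv c d -> seq_equiv d c.
Proof. intros [? [? ?]]; repeat split; apply Permutation_sym; auto. Qed.
Lemma se_trans (c d e : tseq A) : seq_equiv c d -> seq_equiv d e -> seq_equiv c e.
Proof. intros [? [? ?]] [? [? ?]]; repeat split; eapply Permutation_trans; eauto. Qed.

Lemma rule_equiv r ps (c c' : tseq A) : rule r ps c -> seq_equiv c c' -> rule r ps c'.
Proof.
  intros H E; destruct H; econstructor; eauto using se_trans, se_sym.
Qed.

Lemma in_perm (T : Type) (x : T) l : List.In x l -> exists l', Permutation l (x :: l').
Proof.
  intro H; destruct (List.in_split _ _ H) as [l1 [l2 ->]].
  exists (List.app l1 l2). apply Permutation_sym, Permutation_middle.
Qed.

Lemma initial_iff (c : tseq A) : initial c <->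
  (exists p, List.In (Var A p) (tant c) /\ List.In (Var A p) (tsuc c)) \/ List.In Bot (tant c).
Proof.
  split.
  - intros [[p [S [G [D [_ [H1 H2]]]]]] | [S [G [D [_ [H1 _]]]]]].
    + left; exists p; split; eapply Permutation_in;
        try (apply Permutation_sym; eassumption); simpl; auto.
    + right; eapply Permutation_in; try (apply Permutation_sym; eassumption); simpl; auto.
  - unfold initial; intros [[p [H1 H2]] | H].
    + left; destruct (in_perm H1) as [G HG]; destruct (in_perm H2) as [D HD].
      exists p, (tsig c), G, D; repeat split; auto; apply Permutation_refl.
    + right; destruct (in_perm H) as [G HG].
      exists (tsig c), G, (tsuc c); repeat split; auto; apply Permutation_refl.
Qed.

Lemma derh_equiv n (c c' : tseq A) : derh n c -> seq_equiv c c' -> derh n c'.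
Proof.
  intros H E; inversion H; subst.
  - constructor. apply initial_iff. apply initial_iff in H0.
    destruct E as [_ [E1 E2]].
    destruct H0 as [[p [H1 H2]] | H1]; [left; exists p; split | right];
      eapply Permutation_in; eauto.
  - econstructor; eauto using rule_equiv.
Qed.


Lemma decomp r ps (c : tseq A) : rule r ps c -> r <> RDK ->
  exists s f S G D, ok s f /\ ps = map (app3 S G D) (premsof s f)
                    /\ seq_equiv c (concl s f S G D).
Proof.
  intros H Hr; destruct H; try congruence;
  first [ refine (ex_intro _ true (ex_intro _ _ (ex_intro _ S (ex_intro _ G
            (ex_intro _ D (conj _ (conj _ H)))))))
        | refine (ex_intro _ false (ex_intro _ _ (ex_intro _ S (ex_intro _ G
            (ex_intro _ D (conj _ (conj _ H))))))) ];
  first [exact I | reflexivity].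
Qed.

Lemma recomp s f S G D (c : tseq A) : ok s f -> seq_equiv c (concl s f S G D) ->
  exists r, r <> RDK /\ rule r (map (app3 S G D) (premsof s f)) c.
Proof.
  intros Hok H; destruct s, f; simpl in Hok; try contradiction;
  unfold concl in H; simpl; unfold app3; simpl;
  (eexists; split; [|first [apply r_andR; exact H | apply r_andL; exact H |
     apply r_orR; exact H | apply r_orL; exact H | apply r_impR; exact H |
     apply r_impL; exact H | apply r_negR; exact H | apply r_negL; exact H |
     apply r_DT; exact H]]); discriminate.
Qed.

Lemma concl_same s f S G D S' G' D' :
  seq_equiv (concl s f S G D) (concl s f S' G' D') -> seq_equiv (TSeq S G D) (TSeq S' G' D').
Proof.
  destruct s; intros [H1 [H2 H3]]; repeat split; simpl in *; auto;
    eapply Permutation_cons_inv; eassumption.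
Qed.

Lemma concl_diff s f S G D s' f' S' G' D' :
  seq_equiv (concl s f S G D) (concl s' f' S' G' D') -> ~ (s = s' /\ f = f') ->
  exists G0 D0, seq_equiv (TSeq S G D) (concl s' f' S G0 D0) /\
                seq_equiv (TSeq S' G' D') (concl s f S G0 D0).
Proof.
  intros [H1 [H2 H3]] Hn; destruct s, s'; simpl in *.
  - assert (f <> f') by (intro; apply Hn; auto).
    assert (Hi : List.In f' G).
    { assert (Hx : List.In f' (f :: G)) by (eapply Permutation_in;
        [apply Permutation_sym; exact H2 | left; reflexivity]).
      destruct Hx; [congruence | auto]. }
    destruct (in_perm Hi) as [G0 HG].
    assert (HG' : Permutation G' (f :: G0)).
    { apply (@Permutation_cons_inv _ _ _ f').
      eapply Permutation_trans; [apply Permutation_sym; exact H2|].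
      eapply Permutation_trans; [apply perm_skip; exact HG|]. apply perm_swap. }
    exists G0, D; repeat split; simpl; auto using Permutation_sym, Permutation_refl.
  - exists G, D'; repeat split; simpl; auto using Permutation_sym, Permutation_refl.
  - exists G', D; repeat split; simpl; auto using Permutation_sym, Permutation_refl.
  - assert (f <> f') by (intro; apply Hn; auto).
    assert (Hi : List.In f' D).
    { assert (Hx : List.In f' (f :: D)) by (eapply Permutation_in;
        [apply Permutation_sym; exact H3 | left; reflexivity]).
      destruct Hx; [congruence | auto]. }
    destruct (in_perm Hi) as [D0 HD].
    assert (HD' : Permutation D' (f :: D0)).
    { apply (@Permutation_cons_inv _ _ _ f').
      eapply Permutation_trans; [apply Permutation_sym; exact H3|].
      eapply Permutation_trans; [apply perm_skip; exact HD|]. apply perm_swap. }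
    exists G, D0; repeat split; simpl; auto using Permutation_sym, Permutation_refl.
Qed.

Lemma in_map_inv (T U : Type) (g : T -> U) (l : seq T) y :
  List.In y (map g l) -> exists x, List.In x l /\ y = g x.
Proof.
  induction l as [|a l IHl]; simpl; [contradiction|].
  intros [<- | H]; [exists a; auto|]. destruct (IHl H) as [x [? ?]]; exists x; auto.
Qed.

Lemma in_map' (T U : Type) (g : T -> U) (l : seq T) x :
  List.In x l -> List.In (g x) (map g l).
Proof.
  induction l as [|a l IHl]; simpl; [contradiction|]. intros [<- | H]; auto.
Qed.

Lemma forall2_in (P : nat -> tseq A -> Prop) hs ps p :
  List.Forall2 P hs ps -> List.In p ps -> exists h, List.In h hs /\ P h p.
Proof.
  induction 1; simpl; [contradiction|]. intros [<- | Hi]; [exists x; auto|].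
  destruct (IHForall2 Hi) as [h [? ?]]; exists h; auto.
Qed.

Lemma in_le_max h hs : List.In h hs -> h <= foldr maxn 0 hs.
Proof.
  induction hs as [|a hs IH]; simpl; [contradiction|].
  intros [<- | Hi]; [lia|]. specialize (IH Hi); lia.
Qed.

Lemma forall2_build (P Q : nat -> tseq A -> Prop) (g F : trip -> tseq A) L hs :
  List.Forall2 P hs (map g L) ->
  (forall h u, List.In u L -> List.In h hs -> P h (g u) -> exists m, m <= h /\ Q m (F u)) ->
  exists ms, List.Forall2 Q ms (map F L) /\ foldr maxn 0 ms <= foldr maxn 0 hs.
Proof.
  revert hs; induction L as [|u L IHL]; intros hs H2 HH; simpl in *.
  - inversion H2; subst. exists [::]; split; [constructor | done].
  - inversion H2 as [|h y0 hs' ys Hp H2']; subst.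
    destruct (HH h u (or_introl (erefl _)) (or_introl (erefl _)) Hp) as [m [Hm HQ]].
    destruct (IHL hs' H2') as [ms [Hms Hle]].
    { intros h0 u0 Hu Hh; apply HH; simpl; auto. }
    exists (m :: ms); split; [constructor; auto|]. simpl; lia.
Qed.

Lemma atomic_in s f S G D x : ok s f -> is_atomic x ->
  (List.In x (tant (concl s f S G D)) -> List.In x G) /\
  (List.In x (tsuc (concl s f S G D)) -> List.In x D).
Proof.
  intros Hok Hx; destruct s; simpl; split; auto; intros [<- | H]; auto;
    destruct f; simpl in *; contradiction.
Qed.

Lemma app3_equiv S G D S' G' D' t :
  seq_equiv (TSeq S G D) (TSeq S' G' D') -> seq_equiv (app3 S G D t) (app3 S' G' D' t).
Proof.
  intros [H1 [H2 H3]]; simpl in *; repeat split; simpl; apply Permutation_app_head; auto.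
Qed.

Lemma app3_concl s f S G D S' G' D' t :
  seq_equiv (TSeq S G D) (concl s f S' G' D') ->
  seq_equiv (app3 S G D t) (concl s f (List.app t.1.1 S') (List.app t.1.2 G') (List.app t.2 D')).
Proof.
  destruct s; intros [H1 [H2 H3]]; simpl in *; repeat split; simpl;
  first [ apply Permutation_app_head; assumption
        | eapply Permutation_trans; [apply Permutation_app_head; eassumption|];
          apply Permutation_sym, Permutation_middle ].
Qed.

Lemma app3_swap S G D t u :
  seq_equiv (app3 (List.app u.1.1 S) (List.app u.1.2 G) (List.app u.2 D) t)
            (app3 (List.app t.1.1 S) (List.app t.1.2 G) (List.app t.2 D) u).
Proof. repeat split; simpl; apply Permutation_app_swap_app. Qed.

Lemma main n : forall c, derh n c -> forall s f S G D, ok s f ->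
  seq_equiv c (concl s f S G D) ->
  forall t, List.In t (premsof s f) -> exists m, m <= n /\ derh m (app3 S G D t).
Proof.
  induction n as [n IH] using ltn_ind.
  intros c Hd s f S G D Hok Hc t Ht.
  inversion Hd as [c0 Hi | r ps c0 hs Hr Hf]; subst.
  - exists 0; split; [done|]. constructor. apply initial_iff in Hi; apply initial_iff.
    destruct Hc as [_ [H2 H3]].
    destruct Hi as [[p [Hp1 Hp2]] | Hb]; [left; exists p; split | right];
      simpl; apply List.in_or_app; right.
    + apply (proj1 (@atomic_in s f S G D (Var A p) Hok I)). eapply Permutation_in; eauto.
    + apply (proj2 (@atomic_in s f S G D (Var A p) Hok I)). eapply Permutation_in; eauto.
    + apply (proj1 (@atomic_in s f S G D Bot Hok I)). eapply Permutation_in; eauto.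
  - destruct (classic (r = RDK)) as [-> | Hne].
    + inversion Hr as [| | | | | | | | | S0 bs Pi Om g b c1 _ _ HPi HOm Hc1]; subst.
      destruct Hc1 as [_ [K2 K3]]; destruct Hc as [_ [H2 H3]].
      destruct s; simpl in *.
      * assert (Hin : List.In f Pi).
        { eapply Permutation_in; [exact K2|]. eapply Permutation_in;
            [apply Permutation_sym; exact H2| left; reflexivity]. }
        rewrite List.Forall_forall in HPi. specialize (HPi f Hin).
        destruct f; simpl in *; contradiction.
      * assert (Hin : List.In f (Box g b :: Om)).
        { eapply Permutation_in; [exact K3|]. eapply Permutation_in;
            [apply Permutation_sym; exact H3| left; reflexivity]. }
        destruct Hin as [<- | Hin]; [contradiction|].
        rewrite List.Forall_forall in HOm. specialize (HOm f Hin).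
        destruct f; simpl in *; contradiction.
    + destruct (decomp Hr Hne) as [s' [f' [S' [G' [D' [Hok' [-> Hc']]]]]]].
      assert (Hcc : seq_equiv (concl s f S G D) (concl s' f' S' G' D'))
        by (eapply se_trans; [apply se_sym; exact Hc| exact Hc']).
      destruct (classic (s = s' /\ f = f')) as [[<- <-] | Hn].
      * apply concl_same in Hcc.
        destruct (forall2_in Hf (in_map' (app3 S' G' D') Ht)) as [h [Hh Hdh]].
        exists h; split.
        { have := in_le_max Hh. lia. }
        eapply derh_equiv; [exact Hdh|]. apply app3_equiv, se_sym, Hcc.
      * destruct (concl_diff Hcc Hn) as [G0 [D0 [E1 E2]]].
        destruct (@recomp s' f' (List.app t.1.1 S) (List.app t.1.2 G0) (List.app t.2 D0) _ Hok'
                   (app3_concl t E1)) as [r2 [_ Hr2]].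
        destruct (forall2_build (Q := @derh A)
                   (F := app3 (List.app t.1.1 S) (List.app t.1.2 G0) (List.app t.2 D0)) Hf)
          as [ms [Hms Hle]].
        { intros h u Hu Hh Hdh.
          have Hlt : h < (foldr maxn 0 hs).+1 by have := in_le_max Hh; lia.
          destruct (IH h Hlt _ Hdh s f (List.app u.1.1 S) (List.app u.1.2 G0) (List.app u.2 D0)
                      Hok (app3_concl u E2) t Ht) as [m [Hm Hdm]].
          exists m; split; [exact Hm|]. eapply derh_equiv; [exact Hdm|]. apply app3_swap. }
        exists (foldr maxn 0 ms).+1; split; [lia|].
        eapply dh_rule; eauto.
Qed.

End Aux.

Theorem proposition6p10 (A : finType) (hA : 0 < #|A|) (r : rname)
    (ps : list (tseq A)) (c : tseq A) (n : nat) :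
  r <> RDK -> rule r ps c -> derh n c ->
  forall p, List.In p ps -> exists m, m <= n /\ derh m p.
Proof.
  intros Hne Hr Hd p Hp.
  destruct (decomp Hr Hne) as [s [f [S [G [D [Hok [-> Hc]]]]]]].
  destruct (in_map_inv Hp) as [t [Ht ->]].
  exact (main Hd Hok Hc Ht).
Qed.
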